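(* For a poset $P$ on $\{1,2,\ldots,n\}$ and field $k$, the following are equivalent: (i) $I^{\mathfrak{gr}}_P=I_P$ and $\mathfrak{gr}(R_P)\cong R_P$; (ii) the toric ideal $I_P=\ker(\varphi:S\to R_P)$ is homogeneous for the standard $\mathbb{N}$-grading of $S$ in which each $U_J$ has degree one; (iii) every pair $\{J_1,J_2\}$ of connected order ideals of $P$ that intersects nontrivially has $J_1\cap J_2$ connected.
   Context: All posets are finite. A weak $P$-partition is $f:\{1,\ldots,n\}\to\mathbb{N}$ with $f(i)\ge f(j)$ whenever $i<_Pj$; $R_P\subseteq k[x_1,\ldots,x_n]$ is the span of $\mathbf{x}^f=\prod_ix_i^{f(i)}$ over weak $P$-partitions; $\mathfrak{m}$ is spanned by the $\mathbf{x}^f$ with $f\ne0$; $\mathfrak{gr}(R_P)=\bigoplus_i\mathfrak{m}^i/\mathfrak{m}^{i+1}$. A connected order ideal is a nonempty downward-closed subset whose induced Hasse diagram is connected; $\mathcal{J}_{\mathrm{conn}}(P)$ is the set of these; two of them intersect nontrivially if neither disjoint nor nested; $\Pi(P)$ is the set of such pairs. $S=k[U_J]_{J\in\mathcal{J}_{\mathrm{conn}}(P)}$; $\varphi:S\to R_P$, $U_J\mapsto\prod_{j\in J}x_j$, and $\mathfrak{gr}(\varphi):S\to\mathfrak{gr}(R_P)$ sends $U_J$ to the class of $\prod_{j\in J}x_j$ in $\mathfrak{m}/\mathfrak{m}^2$. $I_P=\ker\varphi$ is generated by $U_{J_1}U_{J_2}-U_{J_1\cup J_2}U_{J^{(1)}}\cdots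 U_{J^{(t)}}$ ($\{J_1,J_2\}\in\Pi(P)$, $J^{(1)},\ldots,J^{(t)}$ the connected components of $J_1\cap J_2$), and $I^{\mathfrak{gr}}_P=\ker\mathfrak{gr}(\varphi)$ is generated by $U_{J_1}U_{J_2}-U_{J_1\cup J_2}U_{J_1\cap J_2}$ when $J_1\cap J_2$ is connected and $U_{J_1}U_{J_2}$ when disconnected, over $\{J_1,J_2\}\in\Pi(P)$. *)

(* Defs.v *)
From HB Require Import structures.
From mathcomp Require Import all_boot all_order all_algebra.
From mathcomp Require Import fingraph.
From mathcomp.multinomials Require Import mpoly.

Set Implicit Arguments.
Unset Strict Implicit.
Unset Printing Implicit Defensive.

Import Order.TTheory GRing.Theory.
Local Open Scope ring_scope.

(* Posets on {0,...,n-1} (= {1,...,n} shifted) given by a relation le. *)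

Section Poset.
Variables (n : nat) (le : rel 'I_n).

Definition plt (i j : 'I_n) : bool := le i j && (i != j).

Definition pcover (i j : 'I_n) : bool :=
  plt i j && [forall k, ~~ (plt i k && plt k j)].

Definition hasse_on (J : {set 'I_n}) : rel 'I_n :=
  fun x y => [&& x \in J, y \in J & pcover x y || pcover y x].

Definition hasse_connected (J : {set 'I_n}) : bool :=
  [forall x in J, forall y in J, connect (hasse_on J) x y].

Definition order_ideal (J : {set 'I_n}) : bool :=
  [forall x, forall y, (le x y && (y \in J)) ==> (x \in J)].

Definition conn_ideal (J : {set 'I_n}) : bool :=
  [&& J != set0, order_ideal J & hasse_connected J].

Definition intersect_nontriv (J1 J2 : {set 'I_n}) : bool :=
  [&& ~~ [disjoint J1 & J2], ~~ (J1 \subset J2) & ~~ (J2 \subset J1)].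

(* the list of all connected order ideals; U_J is the variable of index
   i where J = nth set0 cideals i *)
Definition cideals : seq {set 'I_n} := [seq J <- enum {set 'I_n} | conn_ideal J].
Definition ncid : nat := size cideals.

(* weak P-partitions, viewed as exponent vectors *)
Definition wpp (f : 'X_{1..n}) : bool :=
  [forall i, forall j, plt i j ==> (f j <= f i)%N].

Variable k : fieldType.

(* R_P : the k-span of the monomials x^f, f a weak P-partition *)
Definition inRP (p : {mpoly k[n]}) : Prop :=
  exists s : seq (k * 'X_{1..n}),
    (forall x, x \in s -> wpp x.2) /\ p = \sum_(x <- s) x.1 *: 'X_[x.2].

(* the ideal m : the k-span of the x^f with f <> 0 a weak P-partition *)
Definition inM (p : {mpoly k[n]}) : Prop :=
  exists s : seq (k * 'X_{1..n}),
    (forall x, x \in s -> wpp x.2 /\ x.2 != 0%MM) /\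
    p = \sum_(x <- s) x.1 *: 'X_[x.2].

Fixpoint inMpow (d : nat) (p : {mpoly k[n]}) : Prop :=
  match d with
  | 0 => inRP p
  | d'.+1 => exists s : seq ({mpoly k[n]} * {mpoly k[n]}),
      (forall x, x \in s -> inM x.1 /\ inMpow d' x.2) /\
      p = \sum_(x <- s) x.1 * x.2
  end.

(* S = k[U_J] and phi : S -> R_P, U_J |-> prod_{j in J} x_j *)

Definition phi (q : {mpoly k[ncid]}) : {mpoly k[n]} :=
  mmap (fun c => c%:MP) (fun i : 'I_ncid => \prod_(j in nth set0 cideals i) 'X_j) q.

Definition inIP (q : {mpoly k[ncid]}) : Prop := phi q = 0.

Definition hcomp (d : nat) (q : {mpoly k[ncid]}) : {mpoly k[ncid]} :=
  pihomog (Measure.clone _ mdeg _) d q.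

(* The associated graded ring gr(R_P) = (+)_d m^d / m^(d+1), presented as
   a setoid: an element is a finite sequence a with a_d in m^d
   (a representative of the degree-d component), two such are equal iff
   a_d - b_d in m^(d+1) for every d. *)

Definition gr_valid (a : seq {mpoly k[n]}) : Prop :=
  forall d, inMpow d (nth 0 a d).

Definition gr_eq (a b : seq {mpoly k[n]}) : Prop :=
  forall d, inMpow d.+1 (nth 0 a d - nth 0 b d).

Definition gr_add (a b : seq {mpoly k[n]}) : seq {mpoly k[n]} :=
  mkseq (fun d => nth 0 a d + nth 0 b d) (maxn (size a) (size b)).

Definition gr_mul (a b : seq {mpoly k[n]}) : seq {mpoly k[n]} :=
  mkseq (fun d => \sum_(i < d.+1) nth 0 a i * nth 0 b (d - i))
        (size a + size b).

Definition gr_scale (c : k) (a : seq {mpoly k[n]}) : seq {mpoly k[n]} :=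
  map (fun x => c *: x) a.

Definition gr_one : seq {mpoly k[n]} := [:: 1].

(* gr(phi) : S -> gr(R_P), the k-algebra map sending U_J to the class of
   prod_{j in J} x_j in m/m^2; on q it sends the degree-d component q_d
   of q to the class of phi(q_d) in m^d/m^(d+1). *)
Definition grphi (q : {mpoly k[ncid]}) : seq {mpoly k[n]} :=
  mkseq (fun d => phi (hcomp d q)) (msize q).

Definition inIgr (q : {mpoly k[ncid]}) : Prop := gr_eq (grphi q) [::].

Definition gr_iso_RP : Prop :=
  exists f : {mpoly k[n]} -> seq {mpoly k[n]},
    (forall p, inRP p -> gr_valid (f p)) /\
    (forall p q, inRP p -> inRP q -> gr_eq (f (p + q)) (gr_add (f p) (f q))) /\
    (forall c p, inRP p -> gr_eq (f (c *: p)) (gr_scale c (f p))) /\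
    (forall p q, inRP p -> inRP q -> gr_eq (f (p * q)) (gr_mul (f p) (f q))) /\
    gr_eq (f 1) gr_one /\
    (forall p q, inRP p -> inRP q -> gr_eq (f p) (f q) -> p = q) /\
    (forall a, gr_valid a -> exists2 p, inRP p & gr_eq (f p) a).

End Poset.

(* Main.v *)
Require Import Defs.
From HB Require Import structures.
From mathcomp Require Import all_boot all_order all_algebra.
From mathcomp Require Import fingraph.
From mathcomp.multinomials Require Import mpoly.
From mathcomp Require Import zify.

Set Implicit Arguments.
Unset Strict Implicit.
Unset Printing Implicit Defensive.
Import GRing.Theory.

Section Comb.
Variables (n : nat) (le : rel 'I_n).
Hypotheses (le_refl : reflexive le) (le_anti : antisymmetric le)
  (le_trans : transitive le).

Local Notation plt := (plt le).
Local Notation pcover := (pcover le).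
Local Notation hrel := (hasse_on le).
Local Notation ideal := (order_ideal le).
Implicit Types (D A B C J K : {set 'I_n}) (x y z t : 'I_n).

Definition con (D : {set 'I_n}) := connect (hrel D).

Lemma hrel_sym D : ssrbool.symmetric (hrel D).
Proof. by move=> x y; rewrite /hasse_on andbCA orbC. Qed.

Lemma con_sym D : connect_sym (hrel D).
Proof. exact: sym_connect_sym (hrel_sym D). Qed.

Lemma hrel_in D x y : hrel D x y -> (x \in D) && (y \in D).
Proof. by case/and3P=> -> ->. Qed.

Lemma closedD D : closed (hrel D) D.
Proof. move=> x y /hrel_in /andP[-> ->] //. Qed.

Lemma con_in D x y : con D x y -> x \in D -> y \in D.
Proof. by move=> c xD; rewrite -(closed_connect (@closedD D) c). Qed.

Lemma hrel_mono (A B : {set 'I_n}) : A \subset B -> subrel (hrel A) (hrel B).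
Proof.
move=> /subsetP AB x y /and3P[xA yA c]; by rewrite /hasse_on (AB _ xA) (AB _ yA).
Qed.

Lemma con_mono (A B : {set 'I_n}) x y : A \subset B -> con A x y -> con B x y.
Proof.
move=> AB; apply: connect_sub => u v h; apply: connect1; exact: hrel_mono h.
Qed.

Lemma idealP D : reflect (forall x y, le x y -> y \in D -> x \in D) (ideal D).
Proof.
apply: (iffP forallP) => [h x y lxy yD | h x].
  by move: (h x) => /forallP /(_ y); rewrite lxy yD.
by apply/forallP => y; apply/implyP => /andP[]; apply: h.
Qed.

Lemma plt_le x y : plt x y -> le x y.
Proof. by case/andP. Qed.

Lemma le_eq x y : le x y -> le y x -> x = y.
Proof. by move=> a b; apply: le_anti; rewrite a b. Qed.

Lemma chain D : ideal D -> forall y z, y \in D -> le z y -> con D z y.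
Proof.
move=> /idealP iD.
suff H : forall N y z, #|[set t | plt z t & le t y]| < N -> y \in D -> le z y -> con D z y.
  by move=> y z; apply: (H _ y z (ltnSn _)).
elim=> // N IH y z hN yD lzy.
have [->|nzy] := eqVneq z y; first exact: connect0.
have pzy : plt z y by rewrite /plt lzy nzy.
have zD : z \in D := iD _ _ lzy yD.
case: (boolP [forall t, ~~ (plt z t && plt t y)]) => [hc|].
  by apply: connect1; rewrite /hasse_on zD yD /pcover pzy hc.
rewrite negb_forall => /existsP[t]; rewrite negbK => /andP[pzt pty].
have tD : t \in D := iD _ _ (plt_le pty) yD.
apply: (connect_trans (y := t)).
  apply: (IH t) => //; last exact: plt_le.
  rewrite -ltnS; apply: (leq_trans _ hN); rewrite ltnS; apply: proper_card; rewrite properE; apply/andP; split.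
    apply/subsetP => s; rewrite !inE => /andP[-> lst] /=.
    exact: le_trans lst (plt_le pty).
  apply/subsetPn; exists y; first by rewrite inE pzy le_refl.
  rewrite inE negb_and; apply/orP; right; apply/negP => lyt.
  by case/andP: pty => lty; rewrite (le_eq lty lyt) eqxx.
apply: (IH y) => //; last exact: plt_le.
rewrite -ltnS; apply: (leq_trans _ hN); rewrite ltnS; apply: proper_card; rewrite properE; apply/andP; split.
  apply/subsetP => s; rewrite !inE => /andP[pts -> ] /=; rewrite andbT.
  case/andP: pts => lts nts; case/andP: pzt => lzt _.
  rewrite /plt (le_trans lzt lts) /=; apply/eqP => ezs; subst s.
  by rewrite (le_eq lzt lts) eqxx in nts.
apply/subsetPn; exists t; first by rewrite inE pzt plt_le.
by rewrite inE negb_and /plt eqxx andbF.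
Qed.


Lemma connect_restrict D C x y :
  (forall u v, u \in C -> hrel D u v -> v \in C) -> C \subset D ->
  x \in C -> con D x y -> con C x y.
Proof.
move=> cl /subsetP CD xC /connectP[p pp ->] {y}.
elim: p x xC pp => [|v p IHp] x xC /=; first by move=> _; exact: connect0.
case/andP=> hxv pp; have vC := cl _ _ xC hxv.
apply: (connect_trans (y := v)); last exact: IHp.
by apply: connect1; case/and3P: hxv => _ _ c; rewrite /hasse_on xC vC c.
Qed.

Definition compo D y := [set z in D | con D y z].
Definition comps D := equivalence_partition (con D) D.
Definition ncomp D := #|comps D|.

Lemma con_equiv D : {in D & &, equivalence_rel (con D)}.
Proof.
move=> x y z _ _ _; split; first exact: connect0.
move=> cxy; apply/idP/idP => c.
  by apply: connect_trans c; rewrite con_sym.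
exact: connect_trans cxy c.
Qed.

Lemma comps_partition D : partition (comps D) D.
Proof. exact: equivalence_partitionP (@con_equiv D). Qed.

Lemma mem_compo D y z : (z \in compo D y) = (z \in D) && con D y z.
Proof. by rewrite inE. Qed.

Lemma compo_sub D y : compo D y \subset D.
Proof. by apply/subsetP => z; rewrite inE => /andP[]. Qed.

Lemma compo_self D y : y \in D -> y \in compo D y.
Proof. by move=> yD; rewrite inE yD /con connect0. Qed.

Lemma compo_eq D a b : a \in D -> b \in D -> (compo D a == compo D b) = con D a b.
Proof.
move=> aD bD; apply/eqP/idP => [e | c].
  by have := compo_self bD; rewrite -e inE => /andP[].
apply/setP => z; rewrite !inE; apply: andb_id2l => zD.
apply/idP/idP => h; last exact: connect_trans c h.
by apply: connect_trans h; rewrite con_sym.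
Qed.

Lemma compo_ideal D y : ideal D -> y \in D -> ideal (compo D y).
Proof.
move=> iD yD; apply/idealP => a b lab; rewrite !inE => /andP[bD cb].
have aD : a \in D by move/idealP: iD => /(_ a b lab bD).
rewrite aD /=; apply: connect_trans cb _; rewrite con_sym; exact: chain.
Qed.

Lemma compo_conn D y : y \in D -> hasse_connected le (compo D y).
Proof.
move=> yD; apply/forall_inP => a aC; apply/forall_inP => b bC.
apply: (connect_restrict (D := D) _ (compo_sub D y) aC); last first.
  move: aC bC; rewrite !inE => /andP[_ ca] /andP[_ cb].
  by apply: connect_trans cb; rewrite con_sym.
move=> u v; rewrite !inE => /andP[uD cu] h; case/andP: (hrel_in h) => _ ->.
exact: connect_trans cu (connect1 h).
Qed.

Lemma compo_cideal D y : ideal D -> y \in D -> conn_ideal le (compo D y).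
Proof.
move=> iD yD; rewrite /conn_ideal compo_ideal ?compo_conn // andbT.
rewrite andbT; by apply/set0Pn; exists y; exact: compo_self.
Qed.

Lemma conn_compo D y : hasse_connected le D -> y \in D -> compo D y = D.
Proof.
move=> /forall_inP cD yD; apply/setP => z; rewrite inE.
by apply: andb_idr => zD; move: (cD _ yD) => /forall_inP; apply.
Qed.

Lemma ncomp_conn D : hasse_connected le D -> D != set0 -> ncomp D = 1.
Proof.
move=> cD /set0Pn[y yD]; rewrite /ncomp /comps /equivalence_partition.
rewrite (_ : [set _ | x in D] = [set D]) ?cards1 //.
apply/setP => S; rewrite inE; apply/imsetP/eqP => [[x xD ->]|->].
  by apply/setP => z; rewrite !inE; apply: andb_idr => zD;
     move/forall_inP: cD => /(_ _ xD) /forall_inP; apply.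
by exists y => //; apply/setP => z; rewrite !inE; apply: esym; apply: andb_idr => zD;
     move/forall_inP: cD => /(_ _ yD) /forall_inP; apply.
Qed.

Lemma card_imset_ker (T U V : finType) (f : T -> U) (g : T -> V) (A : {set T}) :
  {in A &, forall a b, (f a == f b) = (g a == g b)} -> #|f @: A| = #|g @: A|.
Proof.
move: {2}#|A| (leqnn #|A|) => N; elim: N A => [|N IH] A hA fg.
  by move: hA; rewrite leqn0 cards_eq0 => /eqP AE; rewrite AE !imset0 !cards0.
case: (set_0Vmem A) => [AE|[a aA]]; first by rewrite AE !imset0 !cards0.
have -> : A = a |: (A :\ a) by rewrite setD1K.
have sub : A :\ a \subset A by exact: subsetDl.
rewrite !imsetU1 !cardsU1 IH; first last.
- by move=> u v uA vA; apply: fg; apply: (subsetP sub).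
- by move: hA; rewrite (cardsD1 a A) aA add1n ltnS.
congr (_ + _)%N; congr (nat_of_bool _); congr negb.
apply/imsetP/imsetP => [[b bA e]|[b bA e]]; exists b => //; apply/eqP.
  by rewrite -fg ?e // (subsetP sub).
by rewrite fg ?e // (subsetP sub).
Qed.


Definition dx x := [set t | plt t x].
Definition bx x := [set t | le t x].

Lemma bx_cideal x : conn_ideal le (bx x).
Proof.
have iB : ideal (bx x).
  by apply/idealP => a b lab; rewrite !inE => lbx; exact: le_trans lab lbx.
rewrite /conn_ideal iB /=; apply/andP; split.
  by apply/set0Pn; exists x; rewrite inE le_refl.
apply/forall_inP => a; rewrite inE => ax; apply/forall_inP => b; rewrite inE => bx'.
apply: (connect_trans (y := x)); first by apply: chain => //; rewrite inE le_refl.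
by rewrite con_sym; apply: chain => //; rewrite inE le_refl.
Qed.

Lemma dx_ideal x : ideal (dx x).
Proof.
apply/idealP => a b lab; rewrite !inE => /andP[lbx nbx].
rewrite /plt (le_trans lab lbx) /=; apply/eqP => eax; subst a.
by rewrite (le_eq lab lbx) eqxx in nbx.
Qed.

Lemma max_elem D : D != set0 -> exists2 x, x \in D & forall z, z \in D -> le x z -> z = x.
Proof.
case/set0Pn => x0 x0D.
have [x xD xmax] := @arg_maxnP _ x0 (mem D) (fun x => #|bx x|) x0D.
exists x => // z zD lxz; apply/eqP; apply/negPn/negP => nzx.
have := xmax z zD; apply/negP; rewrite -ltnNge; apply: proper_card.
rewrite properE; apply/andP; split.
  by apply/subsetP => t; rewrite !inE => ltx; exact: le_trans ltx lxz.
apply/subsetPn; exists z; first by rewrite inE le_refl.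
by rewrite inE; apply/negP => lzx; rewrite (le_eq lzx lxz) eqxx in nzx.
Qed.

Definition w x : int := (1 - (ncomp (dx x))%:Z)%R.
Definition chi D : int := (\sum_(x in D) w x)%R.

Section Chi.
Hypothesis iii : forall J1 J2, conn_ideal le J1 -> conn_ideal le J2 ->
  intersect_nontriv J1 J2 -> hasse_connected le (J1 :&: J2).

Lemma ncomp_max D x : ideal D -> hasse_connected le D -> x \in D ->
  (forall z, z \in D -> le x z -> z = x) -> ncomp (D :\ x) = ncomp (dx x).
Proof.
move=> iD cD xD xmax; set D' := D :\ x.
have dxsub : dx x \subset D'.
  apply/subsetP => t; rewrite !inE => /andP[ltx ntx]; rewrite ntx /=.
  by move/idealP: iD => /(_ t x ltx xD).
have iD' : ideal D'.
  apply/idealP => a b lab; rewrite !inE => /andP[nbx bD].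
  have aD : a \in D by move/idealP: iD => /(_ a b lab bD).
  rewrite aD andbT; apply/eqP => eax; subst a.
  by rewrite (xmax b bD lab) eqxx in nbx.
have surj : forall z, z \in D' -> exists2 c, c \in dx x & con D' z c.
  move=> z zD'; have zD : z \in D by move: zD'; rewrite inE => /andP[].
  move/forall_inP: cD => /(_ z zD) /forall_inP /(_ x xD) /connectP[p pp lp].
  elim: p z zD' {zD} pp lp => [|y p IHp] z zD' /=.
    by move=> _ ezx; move: zD'; rewrite -ezx /D' setD11.
  case/andP => hzy pp lp.
  have [eyx|nyx] := eqVneq y x.
    subst y; exists z; last exact: connect0.
    have zD : z \in D by move: zD'; rewrite inE => /andP[].
    case/and3P: hzy => _ _ /orP[/andP[pzx _]|/andP[pxz _]]; first by rewrite inE.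
    case/andP: pxz => lxz nxz; by rewrite (xmax z zD lxz) eqxx in nxz.
  have yD' : y \in D'.
    by rewrite /D' !inE nyx; case/and3P: hzy.
  have [c cdx cyc] := IHp y yD' pp lp; exists c => //.
  apply: connect_trans cyc; apply: connect1.
  by case/and3P: hzy => _ _ cc; rewrite /hasse_on zD' yD' cc.
rewrite /ncomp; have -> : comps D' = compo D' @: dx x.
  apply/setP => S; apply/imsetP/imsetP => [[z zD' ->]|[c cdx ->]].
    have [c cdx czc] := surj z zD'; exists c => //; apply/eqP.
    by rewrite (compo_eq zD' (subsetP dxsub _ cdx)).
  by exists c => //; exact: (subsetP dxsub).
have -> : comps (dx x) = compo (dx x) @: dx x by [].
apply: card_imset_ker.
move=> a b adx bdx; rewrite (compo_eq adx bdx).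
rewrite (compo_eq (subsetP dxsub _ adx) (subsetP dxsub _ bdx)).
apply/idP/idP => c; last exact: con_mono dxsub c.
set K := compo D' a.
have aD' := subsetP dxsub _ adx; have bD' := subsetP dxsub _ bdx.
have cK : conn_ideal le K by exact: compo_cideal.
have aK : a \in K by exact: compo_self.
have bK : b \in K by rewrite inE bD'.
have xK : x \notin K by rewrite inE !inE eqxx.
have KB : K :&: bx x \subset dx x.
  apply/subsetP => t; rewrite !inE => /andP[/andP[/andP[ntx _] _] ltx].
  by rewrite /plt ltx ntx.
have aKB : a \in K :&: bx x.
  by rewrite inE aK inE; move: adx; rewrite inE => /andP[].
have bKB : b \in K :&: bx x.
  by rewrite inE bK inE; move: bdx; rewrite inE => /andP[].
suff hc : hasse_connected le (K :&: bx x).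
  by apply: con_mono KB _; move/forall_inP: hc => /(_ a aKB) /forall_inP /(_ b bKB).
case: (boolP (K \subset bx x)) => [KsB|KnB].
  by rewrite (setIidPl KsB); case/and3P: cK.
apply: iii => //; first exact: bx_cideal.
rewrite /intersect_nontriv KnB /=; apply/andP; split.
  by rewrite -setI_eq0; apply/set0Pn; exists a.
by apply/negP => /subsetP /(_ x); rewrite inE le_refl => /(_ isT); apply/negP.
Qed.

Lemma chi_ncomp D : ideal D -> chi D = Posz (ncomp D).
Proof.
move: {2}#|D| (leqnn #|D|) => N; elim: N D => [|N IH] D hD iD.
  move: hD; rewrite leqn0 cards_eq0 => /eqP ->.
  by rewrite /chi big_set0 /ncomp /comps /equivalence_partition imset0 cards0.
case: (eqVneq D set0) => [->|nD].
  by rewrite /chi big_set0 /ncomp /comps /equivalence_partition imset0 cards0.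
case: (boolP (hasse_connected le D)) => cD.
  have [x xD xmax] := max_elem nD.
  rewrite ncomp_conn // /chi (bigD1 x) //=.
  rewrite (eq_bigl (fun z => z \in D :\ x)); last by move=> z; rewrite !inE andbC.
  have iD' : ideal (D :\ x).
    apply/idealP => a b lab; rewrite !inE => /andP[nbx bD].
    have aD : a \in D by move/idealP: iD => /(_ a b lab bD).
    rewrite aD andbT; apply/eqP => eax; subst a.
    by rewrite (xmax b bD lab) eqxx in nbx.
  rewrite -/(chi (D :\ x)) IH //; last first.
    by move: hD; rewrite (cardsD1 x D) xD add1n ltnS.
  by rewrite ncomp_max // /w subrK.
rewrite /chi (set_partition_big _ (comps_partition D)) /=.
rewrite /ncomp -[Posz #|_|]natz -sumr_const; apply: eq_bigr => C.
case/imsetP => y yD ->; rewrite -/(compo D y) -/(chi (compo D y)).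
rewrite IH ?compo_ideal ?ncomp_conn ?compo_conn //.
- by apply/set0Pn; exists y; exact: compo_self.
rewrite -ltnS; apply: (leq_trans _ hD); apply: proper_card.
rewrite properE compo_sub /=; apply/negP => sDC.
have eC : compo D y = D by apply/eqP; rewrite eqEsubset compo_sub.
by move: cD; rewrite -eC compo_conn.
Qed.

Lemma chi_conn J : conn_ideal le J -> chi J = 1%R.
Proof.
by case/and3P => nJ iJ cJ; rewrite chi_ncomp // ncomp_conn.
Qed.

End Chi.


Definition mK J : 'X_{1..n} := [multinom (i \in J : nat) | i < n].
Lemma mKE J i : mK J i = (i \in J). Proof. by rewrite mnmE. Qed.

Definition EJ (i : 'I_(ncid le)) := nth set0 (cideals le) i.
Lemma EJ_cideal i : conn_ideal le (EJ i).
Proof.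
have : EJ i \in cideals le by apply: mem_nth.
by rewrite mem_filter => /andP[].
Qed.

Lemma index_cideal J : conn_ideal le J -> exists i, EJ i = J.
Proof.
move=> cJ; have JC : J \in cideals le by rewrite mem_filter cJ mem_enum.
have hi : (index J (cideals le) < ncid le)%N by rewrite index_mem.
by exists (Ordinal hi); rewrite /EJ /= nth_index.
Qed.

Definition E (u : 'X_{1..ncid le}) : 'X_{1..n} :=
  (\sum_(i < ncid le) mK (EJ i) *+ u i)%MM.

Lemma EE u j : E u j = (\sum_(i < ncid le) (j \in EJ i) * u i)%N.
Proof. by rewrite /E mnm_sumE; apply: eq_bigr => i _; rewrite mulmnE mKE mulnC. Qed.

Lemma ED u v : E (u + v)%MM = (E u + E v)%MM.
Proof.
apply/mnmP => j; rewrite mnmDE !EE -big_split /=; apply: eq_bigr => i _.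
by rewrite mnmDE mulnDr.
Qed.

Lemma E0 : E 0%MM = 0%MM.
Proof. by apply/mnmP => j; rewrite EE mnm0E big1 // => i _; rewrite mnm0E muln0. Qed.

Lemma EU i : E U_(i)%MM = mK (EJ i).
Proof.
apply/mnmP => j; rewrite EE (bigD1 i) //= big1 ?addn0.
  by rewrite mnm1E eqxx muln1 mKE.
by move=> i' ni; rewrite mnm1E eq_sym (negbTE ni) muln0.
Qed.

Lemma wppP (f : 'X_{1..n}) : reflect (forall i j, plt i j -> f j <= f i) (wpp le f).
Proof.
apply: (iffP forallP) => [h i j pij | h i].
  by move: (h i) => /forallP /(_ j); rewrite pij.
by apply/forallP => j; apply/implyP; apply: h.
Qed.

Lemma wppD f g : wpp le f -> wpp le g -> wpp le (f + g)%MM.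
Proof.
move=> /wppP hf /wppP hg; apply/wppP => i j pij; rewrite !mnmDE.
exact: leq_add (hf _ _ pij) (hg _ _ pij).
Qed.

Lemma wpp_mK J : ideal J -> wpp le (mK J).
Proof.
move=> /idealP iJ; apply/wppP => i j pij; rewrite !mKE.
by case jJ : (j \in J) => //; rewrite (iJ i j (plt_le pij) jJ).
Qed.

Lemma wppE u : wpp le (E u).
Proof.
rewrite /E; elim/big_ind: _ => //.
- by apply/wppP => i j _; rewrite mnm0E.
- exact: wppD.
move=> i _; elim: (u i) => [|k IH]; first by rewrite mulm0n; apply/wppP => ? ? _; rewrite mnm0E.
by rewrite mulmS; apply: wppD => //; apply: wpp_mK; case/and3P: (EJ_cideal i).
Qed.

Lemma mdeg_mK_gt0 J y : y \in J -> (0 < mdeg (mK J))%N.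
Proof.
by move=> yJ; rewrite mdegE (bigD1 y) //= mKE yJ add1n ltn0Sn.
Qed.

Lemma fact_exists f : wpp le f -> exists u, E u = f.
Proof.
move: {2}(mdeg f) (leqnn (mdeg f)) => N; elim: N f => [|N IH] f hf wf.
  by exists 0%MM; move: hf; rewrite leqn0 mdeg_eq0 => /eqP ->; rewrite E0.
case: (eqVneq f 0%MM) => [->|nf]; first by exists 0%MM; rewrite E0.
set S := [set i | (0 < f i)%N].
have iS : ideal S.
  apply/idealP => a b lab; rewrite !inE => fb.
  have [->//|nab] := eqVneq a b.
  by apply: leq_trans fb _; move/wppP: wf; apply; rewrite /plt lab nab.
have [y yS] : exists y, y \in S.
  apply/existsP; apply: contraR nf; rewrite negb_exists => /forallP h.
  by apply/eqP/mnmP => i; rewrite mnm0E; move: (h i); rewrite inE lt0n negbK => /eqP.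
set K := compo S y.
have cK : conn_ideal le K by exact: compo_cideal.
have [i Ei] := index_cideal cK.
have KS : (mK K <= f)%MM.
  apply/mnm_lepP => j; rewrite mKE; case jK : (j \in K) => //.
  by move: (subsetP (compo_sub S y) j jK); rewrite inE.
set g := (f - mK K)%MM.
have wg : wpp le g.
  apply/wppP => a b pab; rewrite !mnmBE !mKE.
  have fab : (f b <= f a)%N by move/wppP: wf; apply.
  case bK : (b \in K).
    have aK : a \in K by case/and3P: cK => _ /idealP iK _; exact: iK a b (plt_le pab) bK.
    by rewrite aK leq_sub2r.
  case aK : (a \in K); last by rewrite !subn0.
  rewrite subn0; case: (posnP (f b)) => [->//|fb0].
  have bS : b \in S by rewrite inE.
  have : b \in K.
    rewrite inE bS /=; move: aK; rewrite inE => /andP[aS cya].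
    by apply: connect_trans cya (chain iS bS (plt_le pab)).
  by rewrite bK.
have [v Ev] : exists v, E v = g.
  apply: IH wg; rewrite -ltnS; apply: leq_trans hf.
  have : mdeg f = (mdeg g + mdeg (mK K))%N by rewrite -mdegD submK.
  by move=> ->; rewrite -[X in (X < _)%N]addn0 ltn_add2l; apply: (mdeg_mK_gt0 (compo_self yS)).
exists (v + U_(i))%MM; rewrite ED Ev EU Ei submK //.
Qed.


Lemma ideal_I J1 J2 : ideal J1 -> ideal J2 -> ideal (J1 :&: J2).
Proof.
move=> /idealP i1 /idealP i2; apply/idealP => a b lab; rewrite !inE => /andP[b1 b2].
by rewrite (i1 a b lab b1) (i2 a b lab b2).
Qed.

Lemma ideal_U J1 J2 : ideal J1 -> ideal J2 -> ideal (J1 :|: J2).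
Proof.
move=> /idealP i1 /idealP i2; apply/idealP => a b lab; rewrite !inE => /orP[b1|b2].
  by rewrite (i1 a b lab b1).
by rewrite (i2 a b lab b2) orbT.
Qed.

Lemma union_cideal J1 J2 : conn_ideal le J1 -> conn_ideal le J2 ->
  ~~ [disjoint J1 & J2] -> conn_ideal le (J1 :|: J2).
Proof.
move=> /and3P[n1 i1 /forall_inP c1] /and3P[n2 i2 /forall_inP c2].
rewrite -setI_eq0 => /set0Pn[c]; rewrite inE => /andP[cJ1 cJ2].
rewrite /conn_ideal ideal_U //=; apply/andP; split.
  by apply/set0Pn; exists c; rewrite inE cJ1.
have hc : forall a, a \in J1 :|: J2 -> con (J1 :|: J2) a c.
  move=> a; rewrite inE => /orP[a1|a2].
    apply: (con_mono (A := J1)); first exact: subsetUl.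
    by move: (c1 a a1) => /forall_inP; apply.
  apply: (con_mono (A := J2)); first exact: subsetUr.
  by move: (c2 a a2) => /forall_inP; apply.
apply/forall_inP => a aU; apply/forall_inP => b bU.
by apply: connect_trans (hc a aU) _; rewrite con_sym; apply: hc.
Qed.

Lemma mK_UI J1 J2 : (mK J1 + mK J2 = mK (J1 :|: J2) + mK (J1 :&: J2))%MM.
Proof.
apply/mnmP => i; rewrite !mnmDE !mKE !inE.
by case: (i \in J1); case: (i \in J2).
Qed.

Lemma split_disconn D : ideal D -> ~~ hasse_connected le D ->
  exists C D', [/\ conn_ideal le C, ideal D', D' != set0 & mK D = (mK C + mK D')%MM].
Proof.
move=> iD; rewrite negb_forall_in => /existsP[a /andP[aD]].
rewrite negb_forall_in => /existsP[b /andP[bD nab]].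
exists (compo D a), (D :\: compo D a); split.
- exact: compo_cideal.
- apply/idealP => x y lxy; rewrite !inE => /andP[nyC yD].
  have xD : x \in D by move/idealP: iD => /(_ x y lxy yD).
  rewrite xD andbT; apply: contra nyC => /andP[_ cax].
  by rewrite yD; apply: connect_trans cax (chain iD yD lxy).
- by apply/set0Pn; exists b; rewrite !inE bD andbT; apply: contra nab => /andP[].
apply/mnmP => i; rewrite mnmDE !mKE !inE.
by case: (i \in D); case: (con D a i).
Qed.

Section Lz.
Hypothesis iii : forall J1 J2, conn_ideal le J1 -> conn_ideal le J2 ->
  intersect_nontriv J1 J2 -> hasse_connected le (J1 :&: J2).

Definition Lz (m : 'X_{1..n}) : int := (\sum_(i < n) Posz (m i) * w i)%R.

Lemma LzD m1 m2 : Lz (m1 + m2)%MM = (Lz m1 + Lz m2)%R.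
Proof. by rewrite /Lz -big_split; apply: eq_bigr => i _; rewrite mnmDE PoszD mulrDl. Qed.

Lemma Lz0 : Lz 0%MM = 0%R.
Proof. by rewrite /Lz big1 // => i _; rewrite mnm0E mul0r. Qed.

Lemma LzMn m k : Lz (m *+ k)%MM = (Lz m *+ k)%R.
Proof.
elim: k => [|k IH]; first by rewrite mulm0n Lz0.
by rewrite mulmS LzD IH mulrS.
Qed.

Lemma Lz_mK J : Lz (mK J) = chi J.
Proof.
rewrite /Lz /chi (bigID (fun i => i \in J)) /= [X in (_ + X)%R]big1 ?addr0.
  by rewrite big_mkcond /= [RHS]big_mkcond; apply: eq_bigr => i _; rewrite mKE; case: (i \in J); rewrite ?mul1r.
by move=> i /negbTE iJ; rewrite mKE iJ mul0r.
Qed.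

Lemma LzE u : Lz (E u) = Posz (mdeg u).
Proof.
rewrite /E (big_morph Lz LzD Lz0) mdegE (big_morph Posz PoszD (erefl (Posz 0))).
apply: eq_bigr => i _; rewrite LzMn Lz_mK chi_conn ?natz //; exact: EJ_cideal.
Qed.

Lemma LU u v : E u = E v -> mdeg u = mdeg v.
Proof. by move=> e; have := LzE u; rewrite e LzE => -[]. Qed.

End Lz.

End Comb.

Local Open Scope ring_scope.

Section Spred.
Variables (N : nat) (R : comRingType).
Implicit Types (p q : {mpoly R[N]}) (P Q T : pred 'X_{1..N}).

Definition Spred P p := forall m, ~~ P m -> p@_m = 0.

Lemma SpredP P p : Spred P p <-> (forall m, m \in msupp p -> P m).
Proof.
split=> h m.
  by rewrite mcoeff_msupp; apply: contraNT => /h ->; rewrite eqxx.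
by apply: contraNeq => nz; apply: h; rewrite mcoeff_msupp.
Qed.

Lemma Spred0 P : Spred P 0.
Proof. by move=> m _; rewrite mcoeff0. Qed.

Lemma SpredD P p q : Spred P p -> Spred P q -> Spred P (p + q).
Proof. by move=> hp hq m nm; rewrite mcoeffD hp // hq // addr0. Qed.

Lemma SpredN P p : Spred P p -> Spred P (- p).
Proof. by move=> hp m nm; rewrite mcoeffN hp // oppr0. Qed.

Lemma SpredB P p q : Spred P p -> Spred P q -> Spred P (p - q).
Proof. by move=> hp hq; apply: SpredD => //; apply: SpredN. Qed.

Lemma SpredZ P c p : Spred P p -> Spred P (c *: p).
Proof. by move=> hp m nm; rewrite mcoeffZ hp // mulr0. Qed.

Lemma Spred_sum P (I : eqType) (r : seq I) (F : I -> {mpoly R[N]}) :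
  (forall i, i \in r -> Spred P (F i)) -> Spred P (\sum_(i <- r) F i).
Proof.
elim: r => [|i r IH] h; first by rewrite big_nil; exact: Spred0.
rewrite big_cons; apply: SpredD; first by apply: h; rewrite inE eqxx.
by apply: IH => j jr; apply: h; rewrite inE jr orbT.
Qed.

Lemma SpredX P c m : P m -> Spred P (c *: 'X_[m]).
Proof.
move=> Pm m' nm; rewrite mcoeffZ mcoeffX.
by case: eqP => [e|]; [by subst m'; rewrite Pm in nm | rewrite mulr0].
Qed.

Lemma Spred_mono P Q p : {subset P <= Q} -> Spred P p -> Spred Q p.
Proof. by move=> PQ hp m nQ; apply: hp; apply: contra nQ; apply: PQ. Qed.

Lemma SpredM P Q T p q : (forall a b, P a -> Q b -> T (a + b)%MM) ->
  Spred P p -> Spred Q q -> Spred T (p * q).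
Proof.
move=> hT /SpredP hp /SpredP hq; apply/SpredP => m /msuppM_le /allpairsP.
by case=> -[a b] /= [ap bq ->]; apply: hT; [apply: hp | apply: hq].
Qed.

Lemma mpoly_Spred p : p = \sum_(m <- msupp p) p@_m *: 'X_[m].
Proof. exact: mpolyE. Qed.

Definition Lc P p := \sum_(m <- msupp p | P m) p@_m *: 'X_[m].

Lemma LcE P p m : (Lc P p)@_m = if P m then p@_m else 0.
Proof.
rewrite /Lc raddf_sum big_mkcond /=.
under eq_bigr do rewrite mcoeffZ mcoeffX.
case: (boolP (m \in msupp p)) => mp.
  rewrite (bigD1_seq m) ?msupp_uniq //= eqxx mulr1 big1 ?addr0 //.
  by move=> m' nm; case: (P m') => //; rewrite (negbTE nm) mulr0.
rewrite big_seq big1; first by rewrite (memN_msupp_eq0 mp); case: (P m).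
move=> m' m'p; case: (P m') => //; case: eqP => [e|]; last by rewrite mulr0.
by subst m'; rewrite m'p in mp.
Qed.

Lemma LcD P p q : Lc P (p + q) = Lc P p + Lc P q.
Proof. by apply/mpolyP => m; rewrite mcoeffD !LcE mcoeffD; case: (P m); rewrite ?addr0. Qed.

Lemma LcZ P c p : Lc P (c *: p) = c *: Lc P p.
Proof. by apply/mpolyP => m; rewrite mcoeffZ !LcE mcoeffZ; case: (P m); rewrite ?mulr0. Qed.

Lemma LcB P p q : Lc P (p - q) = Lc P p - Lc P q.
Proof. by apply/mpolyP => m; rewrite mcoeffB !LcE mcoeffB; case: (P m); rewrite ?subr0. Qed.

Lemma Lc_sum P (I : Type) (r : seq I) (F : I -> {mpoly R[N]}) :
  Lc P (\sum_(i <- r) F i) = \sum_(i <- r) Lc P (F i).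
Proof.
elim: r => [|i r IH]; last by rewrite !big_cons LcD IH.
by rewrite !big_nil; apply/mpolyP => m; rewrite LcE mcoeff0; case: (P m).
Qed.

Lemma LcX P m : Lc P 'X_[m] = if P m then 'X_[m] else 0.
Proof.
apply/mpolyP => m'; rewrite LcE; case: (boolP (P m)) => Pm; case: (boolP (P m')) => Pm' //.
- by rewrite mcoeffX; case: eqP => // e; subst m'; rewrite Pm in Pm'.
- by rewrite mcoeffX mcoeff0; case: eqP => // e; subst m'; rewrite Pm' in Pm.
- by rewrite mcoeff0.
Qed.

Lemma Spred_Lc P Q p : Spred Q p -> Spred (predI P Q) (Lc P p).
Proof.
move=> hp m; rewrite LcE /= negb_and; case: (P m) => //= nq; exact: hp.
Qed.

End Spred.

Section Poly.
Variables (n : nat) (le : rel 'I_n) (k : fieldType).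
Hypotheses (le_refl : reflexive le) (le_anti : antisymmetric le)
  (le_trans : transitive le).

Local Notation E := (@E n le).
Local Notation EJ := (@EJ n le).
Local Notation ncid := (ncid le).
Local Notation phi := (@phi n le k).

Lemma mK_sum (J : {set 'I_n}) : mK J = (\sum_(j in J) U_(j))%MM.
Proof.
apply/mnmP => i; rewrite mKE mnm_sumE.
rewrite (eq_bigr (fun j => (j == i) : nat)); last by move=> j _; rewrite mnm1E.
rewrite big_mkcond (bigD1 i) //= eqxx big1 ?addn0; first by case: (i \in J).
by move=> j nji; case: (j \in J) => //; rewrite (negbTE nji).
Qed.

Definition hh (i : 'I_ncid) : {mpoly k[n]} := \prod_(j in EJ i) 'X_j.

Lemma phi_mpolyC q : phi q = mmap (@mpolyC n k) hh q.
Proof. by []. Qed.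

Lemma phiD p q : phi (p + q) = phi p + phi q.
Proof. by rewrite !phi_mpolyC mmapD. Qed.

Lemma phiZ c p : phi (c *: p) = c *: phi p.
Proof. by rewrite !phi_mpolyC mmapZ mul_mpolyC. Qed.


Lemma phi0 : phi 0 = 0.
Proof. by rewrite phi_mpolyC mmap0. Qed.

Lemma phiB p q : phi (p - q) = phi p - phi q.
Proof. by rewrite !phi_mpolyC mmapB. Qed.

Lemma phi_sum (I : Type) (r : seq I) (F : I -> {mpoly k[ncid]}) :
  phi (\sum_(i <- r) F i) = \sum_(i <- r) phi (F i).
Proof.
elim: r => [|i r IH]; first by rewrite !big_nil phi0.
by rewrite !big_cons phiD IH.
Qed.

Lemma hh_X i : hh i = 'X_[mK (EJ i)].
Proof.
rewrite /hh mK_sum; apply: esym.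
exact: (big_morph (fun m => 'X_[m] : {mpoly k[n]}) (@mpolyXD _ _) (@mpolyX0 _ _)).
Qed.

Lemma phiX u : phi 'X_[u] = 'X_[E u].
Proof.
rewrite phi_mpolyC mmapX /mmap1 /E.
rewrite (big_morph (fun m => 'X_[m] : {mpoly k[n]}) (@mpolyXD _ _) (@mpolyX0 _ _)).
by apply: eq_bigr => i _; rewrite hh_X mpolyXn.
Qed.

Local Notation hcomp := (@hcomp n le k).

Lemma hcompX d u : hcomp d 'X_[u] = if mdeg u == d then 'X_[u] else 0.
Proof. by rewrite /hcomp pihomogX. Qed.

Lemma hcompD d p q : hcomp d (p + q) = hcomp d p + hcomp d q.
Proof. by rewrite /hcomp pihomogD. Qed.

Lemma hcompB d p q : hcomp d (p - q) = hcomp d p - hcomp d q.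
Proof. by rewrite /hcomp pihomogB. Qed.

Lemma hcompZ d c p : hcomp d (c *: p) = c *: hcomp d p.
Proof. by rewrite /hcomp linearZ. Qed.

Lemma hcomp_sum d (I : Type) (r : seq I) (F : I -> {mpoly k[ncid]}) :
  hcomp d (\sum_(i <- r) F i) = \sum_(i <- r) hcomp d (F i).
Proof. by rewrite /hcomp raddf_sum. Qed.

Lemma hcomp_big d q : (msize q <= d)%N -> hcomp d q = 0.
Proof.
move=> hq; rewrite /hcomp pihomogE big_seq_cond big1 // => m /andP[mq /eqP e].
by move: (msize_mdeg_lt mq); rewrite /= in e; rewrite e ltnNge hq.
Qed.

Lemma hcomp_id e d q : hcomp e (hcomp d q) = if e == d then hcomp d q else 0.
Proof.
case: eqP => [->|ne]; first by rewrite /hcomp pihomog_id.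
by apply: (pihomog_ne0 (d := d)); [apply/eqP => ed; apply: ne | apply: pihomogP].
Qed.


Local Notation inMpow := (@inMpow n le k).
Local Notation inIP := (@inIP n le k).
Local Notation inIgr := (@inIgr n le k).
Local Notation grphi := (@grphi n le k).

Lemma nth_grphi q d : nth 0 (grphi q) d = phi (hcomp d q).
Proof.
rewrite /grphi; case: (ltnP d (msize q)) => hd; first by rewrite nth_mkseq.
by rewrite nth_default ?size_mkseq // hcomp_big // phi0.
Qed.

Lemma inIgr_iff q : inIgr q <-> forall d, inMpow d.+1 (phi (hcomp d q)).
Proof.
rewrite /inIgr /gr_eq; split=> h d; move: (h d); rewrite nth_grphi nth_nil subr0 //.
Qed.

Lemma inMpow0 d : inMpow d 0.
Proof. by case: d => [|d]; exists [::]; rewrite big_nil. Qed.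

Lemma i_ii : (forall q, inIgr q <-> inIP q) ->
  forall q, inIP q -> forall d, inIP (hcomp d q).
Proof.
move=> h q /h /inIgr_iff hq d; apply/h/inIgr_iff => e.
rewrite hcomp_id; case: eqP => [->|_]; first exact: hq.
by rewrite phi0; apply: inMpow0.
Qed.


Lemma X_neq0 (N : nat) (m : 'X_{1..N}) : ('X_[m] : {mpoly k[N]}) != 0.
Proof. by apply/eqP => /(congr1 (mcoeff m)); rewrite mcoeffX eqxx mcoeff0 => /eqP; rewrite oner_eq0. Qed.

Lemma ii_iii : (forall q, inIP q -> forall d, inIP (hcomp d q)) ->
  forall J1 J2 : {set 'I_n}, conn_ideal le J1 -> conn_ideal le J2 ->
  intersect_nontriv J1 J2 -> hasse_connected le (J1 :&: J2).
Proof.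
move=> hii J1 J2 c1 c2 /and3P[nd _ _]; apply/negPn/negP => nc.
have i1 : order_ideal le J1 by case/and3P: c1.
have i2 : order_ideal le J2 by case/and3P: c2.
have [C [D' [cC iD' nD' eD]]] := split_disconn le_refl le_anti le_trans (ideal_I i1 i2) nc.
have cU := union_cideal c1 c2 nd.
have [j1 e1] := index_cideal c1.
have [j2 e2] := index_cideal c2.
have [jU eU] := index_cideal cU.
have [jC eC] := index_cideal cC.
have [v ev] := fact_exists le_refl le_anti le_trans (wpp_mK iD').
set u1 := (U_(j1) + U_(j2))%MM.
set u2 := (U_(jU) + U_(jC) + v)%MM.
have Eu : E u1 = E u2.
  by rewrite /u1 /u2 !ED !EU e1 e2 eU eC ev mK_UI eD addmA.
have dv : (0 < mdeg v)%N.
  rewrite lt0n mdeg_eq0; apply: contra nD' => /eqP v0.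
  move: ev; rewrite v0 E0 => /esym mK0; apply/eqP/setP => i; rewrite inE.
  by move/mnmP: mK0 => /(_ i); rewrite mKE mnm0E => /eqP; rewrite eqb0 => /negbTE.
have d1 : mdeg u1 = 2%N by rewrite mdegD !mdeg1.
have d2 : mdeg u2 != 2%N.
  by rewrite /u2 !mdegD !mdeg1; move: dv; case: (mdeg v).
have := hii ('X_[u1] - 'X_[u2]) _ 2%N.
rewrite /inIP phiB !phiX Eu subrr => /(_ erefl).
rewrite hcompB !hcompX d1 eqxx (negbTE d2) subr0 phiX => /eqP.
by rewrite (negbTE (X_neq0 _)).
Qed.

End Poly.

Section Iii.
Variables (n : nat) (le : rel 'I_n) (k : fieldType).
Hypotheses (le_refl : reflexive le) (le_anti : antisymmetric le)
  (le_trans : transitive le).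
Hypothesis iii : forall J1 J2, conn_ideal le J1 -> conn_ideal le J2 ->
  intersect_nontriv J1 J2 -> hasse_connected le (J1 :&: J2).

Local Notation E := (@E n le).
Local Notation EJ := (@EJ n le).
Local Notation ncid := (ncid le).
Local Notation phi := (@phi n le k).
Local Notation hcomp := (@hcomp n le k).
Local Notation inMpow := (@inMpow n le k).
Local Notation inRP := (@inRP n le k).
Local Notation inM := (@inM n le k).
Local Notation inIP := (@inIP n le k).
Local Notation inIgr := (@inIgr n le k).
Local Notation grphi := (@grphi n le k).
Local Notation wpp := (wpp le).

Definition Dm (m : 'X_{1..n}) : nat := absz (Lz le m).

Lemma Dm_E u : Dm (E u) = mdeg u.
Proof. by rewrite /Dm (LzE le_refl le_anti le_trans iii). Qed.

Lemma fexists m : wpp m -> exists u, E u = m.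
Proof. exact: fact_exists. Qed.

Lemma DmD a b : wpp a -> wpp b -> Dm (a + b)%MM = (Dm a + Dm b)%N.
Proof.
move=> /fexists[u <-] /fexists[v <-]; by rewrite -ED !Dm_E mdegD.
Qed.

Lemma Dm_eq0 m : wpp m -> (Dm m == 0%N) = (m == 0%MM).
Proof.
move=> /fexists[u <-]; rewrite Dm_E mdeg_eq0.
apply/eqP/eqP => [->|e]; first by rewrite (E0 le).
by apply/eqP; rewrite -mdeg_eq0 -Dm_E e -(E0 le) Dm_E mdeg0.
Qed.

Lemma mdeg_mK_ge1 (J : {set 'I_n}) : J != set0 -> (1 <= mdeg (mK J))%N.
Proof. by case/set0Pn => y yJ; apply: mdeg_mK_gt0 yJ. Qed.

Lemma mdeg_E u : (mdeg u <= mdeg (E u))%N.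
Proof.
rewrite /E mdeg_sum mdegE; apply: leq_sum => i _; rewrite mdegMn.
by rewrite -{1}[u i]mul1n leq_mul2r mdeg_mK_ge1 ?orbT //; case/and3P: (EJ_cideal i).
Qed.

Lemma Dm_mdeg m : wpp m -> (Dm m <= mdeg m)%N.
Proof. by move=> /fexists[u <-]; rewrite Dm_E mdeg_E. Qed.

Definition SP d := [pred m : 'X_{1..n} | wpp m && (d <= Dm m)%N].
Definition Sp d (p : {mpoly k[n]}) := Spred (SP d) p.

Lemma Sp_mono d e p : (d <= e)%N -> Sp e p -> Sp d p.
Proof.
move=> de; apply: Spred_mono => m /andP[wm em]; rewrite /SP inE wm /=.
exact: leq_trans de em.
Qed.

Lemma Sp_sumX d (s : seq (k * 'X_{1..n})) :
  (forall x, x \in s -> SP d x.2) -> Sp d (\sum_(x <- s) x.1 *: 'X_[x.2]).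
Proof. by move=> h; apply: Spred_sum => x xs; apply: SpredX; apply: h. Qed.

Lemma Sp_expand d p : Sp d p ->
  exists s : seq (k * 'X_{1..n}), (forall x, x \in s -> SP d x.2) /\
     p = \sum_(x <- s) x.1 *: 'X_[x.2].
Proof.
move=> /SpredP h; exists [seq (p@_m, m) | m <- msupp p]; split.
  by move=> x /mapP[m mp ->]; apply: h.
by rewrite big_map -mpolyE.
Qed.

Lemma inRP_Sp p : inRP p <-> Sp 0 p.
Proof.
split.
  case=> s [hs ->]; apply: Sp_sumX => x xs; by rewrite /SP inE hs.
move/Sp_expand => [s [hs ->]]; exists s; split => // x xs.
by case/andP: (hs x xs).
Qed.

Lemma inM_Sp p : inM p <-> Sp 1 p.
Proof.
split.
  case=> s [hs ->]; apply: Sp_sumX => x xs; case: (hs x xs) => wx nx.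
  by rewrite /SP inE wx lt0n Dm_eq0.
move/Sp_expand => [s [hs ->]]; exists s; split => // x xs.
by case/andP: (hs x xs) => wx; rewrite lt0n Dm_eq0 // => ->.
Qed.

Lemma inMpowD d p q : inMpow d p -> inMpow d q -> inMpow d (p + q).
Proof.
case: d => [|d].
  by move=> /inRP_Sp hp /inRP_Sp hq; apply/inRP_Sp; apply: SpredD.
case=> s [hs ->] [t [ht ->]]; exists (s ++ t); split; last by rewrite big_cat.
by move=> x; rewrite mem_cat => /orP[]; [apply: hs | apply: ht].
Qed.

Lemma inMpow_sum d (I : eqType) (r : seq I) (F : I -> {mpoly k[n]}) :
  (forall i, i \in r -> inMpow d (F i)) -> inMpow d (\sum_(i <- r) F i).
Proof.
elim: r => [|i r IH] h; first by rewrite big_nil; apply: inMpow0.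
rewrite big_cons; apply: inMpowD; first by apply: h; rewrite inE eqxx.
by apply: IH => j jr; apply: h; rewrite inE jr orbT.
Qed.

Lemma exists_pos (N : nat) (u : 'X_{1..N}) : (0 < mdeg u)%N -> exists i, (0 < u i)%N.
Proof.
move=> h; apply/existsP; apply: contraLR h; rewrite negb_exists => /forallP hu.
rewrite -leqNgt leqn0 mdeg_eq0; apply/eqP/mnmP => i; rewrite mnm0E.
by move: (hu i); rewrite lt0n negbK => /eqP.
Qed.

Lemma inMpow_Sp d p : inMpow d p <-> Sp d p.
Proof.
elim: d p => [|d IH] p; first exact: inRP_Sp.
split.
  case=> s [hs ->]; apply: Spred_sum => x xs; case: (hs x xs) => /inM_Sp h1 /IH h2.
  apply: SpredM h1 h2 => a b /andP[wa da] /andP[wb db].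
  by rewrite /SP inE wppD //= DmD // -add1n leq_add.
move=> /SpredP h; rewrite (mpolyE p); apply: inMpow_sum => m mp.
case/andP: (h m mp) => wm dm; have [u Eu] := fexists wm.
have [i ui] : exists i, (0 < u i)%N.
  by apply: exists_pos; rewrite -Dm_E Eu; apply: leq_trans dm.
have Ui : (U_(i) <= u)%MM.
  by apply/mnm_lepP => j; rewrite mnm1E; case: eqP => [<-|]; rewrite ?ui.
set v := (u - U_(i))%MM.
have uv : u = (U_(i) + v)%MM by rewrite addmC submK.
exists [:: (p@_m *: 'X_[E U_(i)], 'X_[E v])]; split.
  move=> x; rewrite inE => /eqP -> /=; split.
    apply/inM_Sp; apply: SpredX; rewrite /SP inE EU wpp_mK ?Dm_E ?mdeg1 //.
      by rewrite -EU Dm_E mdeg1.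
    by case/and3P: (EJ_cideal i).
  apply/IH; rewrite -[X in Sp _ X]scale1r; apply: SpredX; rewrite /SP inE wppE Dm_E /=.
  by move: dm; rewrite -Eu Dm_E uv mdegD mdeg1 add1n.
by rewrite big_seq1 /= -scalerAl -mpolyXD -ED -uv Eu.
Qed.


Definition LC (d : nat) (p : {mpoly k[n]}) := Lc [pred m : 'X_{1..n} | Dm m == d] p.

Lemma LCE d p m : (LC d p)@_m = if Dm m == d then p@_m else 0.
Proof. by rewrite LcE. Qed.

Lemma phi_hcomp d q : phi (hcomp d q) = LC d (phi q).
Proof.
rewrite {1 2}[q]mpolyE hcomp_sum !phi_sum /LC Lc_sum; apply: eq_bigr => u _.
rewrite hcompZ !phiZ LcZ hcompX phiX LcX /= Dm_E.
by case: eqP => _; rewrite ?phiX ?phi0.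
Qed.

Lemma Igr_IP q : inIgr q <-> inIP q.
Proof.
split.
  move/inIgr_iff => h; apply/mpolyP => m; rewrite mcoeff0.
  have := h (Dm m); rewrite phi_hcomp => /inMpow_Sp /(_ m).
  rewrite LCE eqxx => -> //; rewrite /SP inE negb_and ltnn orbT //.
move=> hq; apply/inIgr_iff => d; rewrite phi_hcomp hq.
suff -> : LC d 0 = 0 by apply: inMpow0.
by apply/mpolyP => m; rewrite LCE mcoeff0; case: ifP.
Qed.


Lemma LCD d p q : LC d (p + q) = LC d p + LC d q. Proof. exact: LcD. Qed.
Lemma LCB d p q : LC d (p - q) = LC d p - LC d q. Proof. exact: LcB. Qed.
Lemma LCZ d c p : LC d (c *: p) = c *: LC d p. Proof. exact: LcZ. Qed.
Lemma LC_sum d (I : Type) (r : seq I) (F : I -> {mpoly k[n]}) :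
  LC d (\sum_(i <- r) F i) = \sum_(i <- r) LC d (F i).
Proof. exact: Lc_sum. Qed.

Lemma LC_on d e r : Spred [pred m : 'X_{1..n} | Dm m == e] r ->
  LC d r = if e == d then r else 0.
Proof.
move=> h; apply/mpolyP => m; rewrite LCE.
case: (eqVneq e d) => [<-|ned].
  by case: (eqVneq (Dm m) e) => // ne; rewrite h // inE ne.
case: (eqVneq (Dm m) d) => [emd|]; last by rewrite mcoeff0.
by rewrite h ?mcoeff0 // inE emd eq_sym.
Qed.

Lemma LC_LC i j p : LC i (LC j p) = if j == i then LC j p else 0.
Proof.
apply: LC_on => m; rewrite LCE inE; case: eqP => //.
Qed.

Lemma LC_Sp d p : Sp 0 p -> Sp d (LC d p).
Proof.
move=> h; rewrite /Sp /LC; apply: (Spred_mono _ (@Spred_Lc _ _ [pred m : 'X_{1..n} | Dm m == d] _ _ h)) => m /andP[/= /eqP <- /andP[wm _]].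
by rewrite /SP inE wm leqnn.
Qed.

Lemma LC_big d p : Sp 0 p -> (msize p <= d)%N -> LC d p = 0.
Proof.
move=> /SpredP h hd; apply/mpolyP => m; rewrite LCE mcoeff0.
case: eqP => // e; apply/eqP; rewrite mcoeff_eq0; apply/negP => mp.
case/andP: (h m mp) => wm _.
have := leq_ltn_trans (Dm_mdeg wm) (msize_mdeg_lt mp).
by rewrite e ltnNge hd.
Qed.

Lemma LC_split p M : Sp 0 p -> (msize p <= M)%N -> p = \sum_(i < M) LC i p.
Proof.
move=> /SpredP h hM; apply/mpolyP => m; rewrite raddf_sum /=.
under eq_bigr do rewrite LCE.
case: (ltnP (Dm m) M) => hm.
  rewrite (bigD1 (Ordinal hm)) //= eqxx big1 ?addr0 // => i ne.
  by case: eqP => // e; case/eqP: ne; apply: val_inj.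
rewrite big1; last by move=> i _; case: eqP => // e; move: (ltn_ord i); rewrite -e ltnNge hm.
apply/eqP; rewrite mcoeff_eq0; apply/negP => mp.
case/andP: (h m mp) => wm _.
have := leq_ltn_trans (Dm_mdeg wm) (msize_mdeg_lt mp).
by move=> /leq_trans /(_ hM); rewrite ltnNge hm.
Qed.

Lemma LC_prod d i j p q : Sp 0 p -> Sp 0 q ->
  LC d (LC i p * LC j q) = if (i + j == d)%N then LC i p * LC j q else 0.
Proof.
move=> hp hq; apply: LC_on.
apply: (SpredM _ (@Spred_Lc _ _ [pred m | Dm m == i] _ _ hp) (@Spred_Lc _ _ [pred m | Dm m == j] _ _ hq)).
move=> a b /andP[/= /eqP ea /andP[wa _]] /andP[/= /eqP eb /andP[wb _]].
by rewrite DmD // ea eb.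
Qed.

Lemma LC_mul d p q : Sp 0 p -> Sp 0 q ->
  LC d (p * q) = \sum_(i < d.+1) LC i p * LC (d - i) q.
Proof.
move=> hp hq; set M := (d + msize p + msize q).+1.
have hMp : (msize p <= M)%N by rewrite /M; lia.
have hMq : (msize q <= M)%N by rewrite /M; lia.
have hMd : (d.+1 <= M)%N by rewrite /M; lia.
rewrite {1}(LC_split hp hMp) {1}(LC_split hq hMq) mulr_suml LC_sum.
under eq_bigr do rewrite mulr_sumr LC_sum.
under eq_bigr do under eq_bigr do rewrite LC_prod //.
rewrite (big_ord_widen M (fun i => LC i p * LC (d - i) q) hMd) big_mkcond /=.
rewrite [RHS]big_mkcond; apply: eq_bigr => i _; case: (ltnP i d.+1) => hi.
  have hdi : (d - i < M)%N by move: hMd; lia.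
  rewrite -big_mkcond (big_pred1 (Ordinal hdi)) //= => j.
  rewrite /= -[RHS]/(val j == d - i)%N; apply/idP/idP => [/eqP <-|/eqP ->].
    by rewrite addKn.
  by rewrite subnKC.
rewrite big1 // => j _; case: eqP => // e; move: hi; rewrite -e; lia.
Qed.


Definition Fg (p : {mpoly k[n]}) := mkseq (fun d => LC d p) (msize p).

Lemma nthF p d : Sp 0 p -> nth 0 (Fg p) d = LC d p.
Proof.
move=> hp; rewrite /Fg; case: (ltnP d (msize p)) => hd; first by rewrite nth_mkseq.
by rewrite nth_default ?size_mkseq // LC_big.
Qed.

Lemma gr_eq_nth (a b : seq {mpoly k[n]}) : (forall d, nth 0 a d = nth 0 b d) -> gr_eq le a b.
Proof. by move=> h d; rewrite h subrr; apply: inMpow0. Qed.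

Lemma nth_gr_add (a b : seq {mpoly k[n]}) d :
  nth 0 (gr_add a b) d = nth 0 a d + nth 0 b d.
Proof.
rewrite /gr_add; case: (ltnP d (maxn (size a) (size b))) => hd; first by rewrite nth_mkseq.
rewrite nth_default ?size_mkseq // !nth_default ?addr0 //.
  by apply: leq_trans hd; rewrite leq_maxr.
by apply: leq_trans hd; rewrite leq_maxl.
Qed.

Lemma nth_gr_scale c (a : seq {mpoly k[n]}) d :
  nth 0 (gr_scale c a) d = c *: nth 0 a d.
Proof.
rewrite /gr_scale; case: (ltnP d (size a)) => hd; first by rewrite (nth_map 0).
by rewrite !nth_default ?size_map // scaler0.
Qed.

Lemma nth_gr_mul (a b : seq {mpoly k[n]}) d :
  nth 0 (gr_mul a b) d = \sum_(i < d.+1) nth 0 a i * nth 0 b (d - i).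
Proof.
rewrite /gr_mul; case: (ltnP d (size a + size b)) => hd; first by rewrite nth_mkseq.
rewrite nth_default ?size_mkseq // big1 // => i _.
case: (ltnP i (size a)) => hi; last by rewrite nth_default ?mul0r.
rewrite [nth 0 b _]nth_default ?mulr0 //.
move: hd hi => h1 h2; rewrite leq_subRL; last by apply: leq_trans (ltnW h2) (leq_trans (leq_addr _ _) h1).
by apply: leq_trans h1; rewrite leq_add2r ltnW.
Qed.

Lemma nth_gr_one d : nth 0 (gr_one n k) d = if d == 0%N then 1 else 0.
Proof. by case: d => [|[|d]]. Qed.

Lemma Sp0D p q : Sp 0 p -> Sp 0 q -> Sp 0 (p + q). Proof. exact: SpredD. Qed.
Lemma Sp0Z c p : Sp 0 p -> Sp 0 (c *: p). Proof. exact: SpredZ. Qed.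
Lemma Sp0M p q : Sp 0 p -> Sp 0 q -> Sp 0 (p * q).
Proof.
apply: SpredM => a b /andP[wa _] /andP[wb _]; by rewrite /SP inE wppD.
Qed.
Lemma Sp0_1 : Sp 0 (1 : {mpoly k[n]}).
Proof.
rewrite -(scale1r 1) -mpolyX0; apply: SpredX; rewrite /SP inE /=.
by rewrite andbT; apply/wppP => i j _; rewrite mnm0E.
Qed.

Lemma Dm0 : Dm 0%MM = 0%N.
Proof.
by apply/eqP; rewrite Dm_eq0 //; apply/wppP => i j _; rewrite mnm0E.
Qed.

Lemma iso : gr_iso_RP le k.
Proof.
exists Fg; split; [|split; [|split; [|split; [|split; [|split]]]]].
- move=> p /inRP_Sp hp d; rewrite nthF //; apply/inMpow_Sp; exact: LC_Sp.
- move=> p q /inRP_Sp hp /inRP_Sp hq; apply: gr_eq_nth => d.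
  by rewrite nth_gr_add !nthF ?LCD //; apply: Sp0D.
- move=> c p /inRP_Sp hp; apply: gr_eq_nth => d.
  by rewrite nth_gr_scale !nthF ?LCZ //; apply: Sp0Z.
- move=> p q /inRP_Sp hp /inRP_Sp hq; apply: gr_eq_nth => d.
  rewrite nth_gr_mul nthF ?LC_mul //; last by apply: Sp0M.
  by apply: eq_bigr => i _; rewrite !nthF.
- apply: gr_eq_nth => d; rewrite nth_gr_one nthF; last exact: Sp0_1.
  rewrite -mpolyX0 /LC LcX /= Dm0 eq_sym.
  by case: eqP.
- move=> p q /inRP_Sp hp /inRP_Sp hq he; apply/eqP; rewrite -subr_eq0; apply/eqP.
  apply/mpolyP => m; rewrite mcoeff0.
  have := he (Dm m); rewrite !nthF // -LCB => /inMpow_Sp /(_ m).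
  rewrite LCE eqxx => -> //; rewrite /SP inE negb_and ltnn orbT //.
move=> a ha; exists (\sum_(d < size a) LC d (nth 0 a d)).
  apply/inRP_Sp; apply: Spred_sum => d _; apply: Sp_mono (leq0n d) _.
  by apply: LC_Sp; apply: Sp_mono (leq0n d) _; apply/inMpow_Sp.
have hp : Sp 0 (\sum_(d < size a) LC d (nth 0 a d)).
  apply: Spred_sum => d _; apply: Sp_mono (leq0n d) _.
  by apply: LC_Sp; apply: Sp_mono (leq0n d) _; apply/inMpow_Sp.
move=> e; rewrite nthF // LC_sum.
under eq_bigr do rewrite LC_LC.
case: (ltnP e (size a)) => he.
  rewrite -big_mkcond /= (big_pred1 (Ordinal he)) /=; last first.
    by move=> i; rewrite /= eq_sym; apply/eqP/eqP => [e'|->//]; apply: val_inj.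
  apply: (proj2 (inMpow_Sp e.+1 _)) => m; rewrite mcoeffB LCE.
  case: eqP => [_|ne]; first by rewrite subrr.
  rewrite /SP inE negb_and -ltnNge ltnS => h.
  have := ha e => /inMpow_Sp /(_ m) ->; rewrite ?subr0 //.
  rewrite /SP inE negb_and -ltnNge.
  case/orP: h => [->//|h]; apply/orP; right; rewrite ltn_neqAle h andbT.
  by apply/eqP.
rewrite big1 ?sub0r ?nth_default ?oppr0 //; first by apply: inMpow0.
by move=> i _; case: eqP => // ei; move: (ltn_ord i); rewrite ei ltnNge he.
Qed.

End Iii.

Theorem corollary6p5 (k : fieldType) (n : nat) (le : rel 'I_n)
  (le_refl : reflexive le) (le_anti : antisymmetric le) (le_trans : transitive le) :
  let condi := (forall q : {mpoly k[ncid le]}, inIgr q <-> inIP q)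
               /\ gr_iso_RP le k in
  let condii := forall q : {mpoly k[ncid le]},
                  inIP q -> forall d, inIP (hcomp d q) in
  let condiii := forall J1 J2 : {set 'I_n},
                  conn_ideal le J1 -> conn_ideal le J2 ->
                  intersect_nontriv J1 J2 -> hasse_connected le (J1 :&: J2) in
  (condi <-> condii) /\ (condii <-> condiii).
Proof.
move=> condi condii condiii.
have h12 : condi -> condii by case=> h _; exact: i_ii h.
have h23 : condii -> condiii by exact: ii_iii.
have h31 : condiii -> condi.
  move=> h; split; [exact: Igr_IP | exact: iso].
by split; split; auto.
Qed.
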